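(* For every integer $k\ge2$, the matrices $A_k=\begin{pmatrix}1&k\\k-1&1\end{pmatrix}$ and $B_k=\begin{pmatrix}1&(k-1)k\\1&1\end{pmatrix}$ are unitally shift equivalent.
   Context: Two square $\mathbb{N}$-matrices $A,B$ are shift equivalent if there are an integer $\ell\ge1$ and rectangular $\mathbb{N}$-matrices $R,S$ with $A^\ell=RS$, $B^\ell=SR$, $AR=RB$, $BS=SA$. Such a shift equivalence $(R,S)$ is unital if there are $m,k\in\mathbb{N}$ with $(B^t)^mR^t\underline{1}=(B^t)^{m+k}\underline{1}$, where $\underline1$ is the all-ones column vector. $A$ and $B$ are unitally shift equivalent if a unital shift equivalence from $A$ to $B$ exists. *)

(* Defs.v *)
From mathcomp Require Import all_boot all_algebra.
Set Implicit Arguments. Unset Strict Implicit. Unset Printing Implicit Defensive.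
Import GRing.Theory.
Local Open Scope ring_scope.

Definition ones (n : nat) : 'cV[nat]_n := const_mx 1%N.

Definition shift_equiv_pair (n m : nat) (A : 'M[nat]_n) (B : 'M[nat]_m)
  (l : nat) (R : 'M[nat]_(n, m)) (S : 'M[nat]_(m, n)) : Prop :=
  [/\ (1 <= l)%N, A ^+ l = R *m S, B ^+ l = S *m R,
      A *m R = R *m B & B *m S = S *m A].

Definition unital_pair (n m : nat) (B : 'M[nat]_m) (R : 'M[nat]_(n, m)) : Prop :=
  exists p k : nat, (B^T) ^+ p *m (R^T *m ones n) = (B^T) ^+ (p + k) *m ones m.

Definition unitally_shift_equivalent (n m : nat) (A : 'M[nat]_n) (B : 'M[nat]_m)
  : Prop :=
  exists (l : nat) (R : 'M[nat]_(n, m)) (S : 'M[nat]_(m, n)),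
    shift_equiv_pair A B l R S /\ unital_pair B R.

Definition A_k (k : nat) : 'M[nat]_2 :=
  \matrix_(i < 2, j < 2)
    (if i == j then 1%N else if (i == 0 :> nat) then k else (k - 1)%N).

Definition B_k (k : nat) : 'M[nat]_2 :=
  \matrix_(i < 2, j < 2)
    (if i == j then 1%N else if (i == 0 :> nat) then ((k - 1) * k)%N else 1%N).

(* Main.v *)
Require Import Defs.
From mathcomp Require Import all_boot all_algebra zify ring.
Import GRing.Theory.
Local Open Scope ring_scope.

Definition mx2 (a b c d : nat) : 'M[nat]_2 :=
  \matrix_(i < 2, j < 2) if i == 0 :> nat then (if j == 0 :> nat then a else b)
                          else (if j == 0 :> nat then c else d).
Definition col2 (u v : nat) : 'cV[nat]_2 :=
  \matrix_(i < 2, j < 1) if i == 0 :> nat then u else v.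

Lemma mx2_mul a b c d e f g h :
  mx2 a b c d *m mx2 e f g h =
  mx2 (a*e+b*g)%N (a*f+b*h)%N (c*e+d*g)%N (c*f+d*h)%N.
Proof.
apply/matrixP => i j; rewrite !mxE !big_ord_recr big_ord0 /= !mxE.
by case: i => [[|[|//]] ?]; case: j => [[|[|//]] ?] /=; rewrite add0r.
Qed.

Lemma mx2_mulc a b c d u v :
  mx2 a b c d *m col2 u v = col2 (a*u+b*v)%N (c*u+d*v)%N.
Proof.
apply/matrixP => i j; rewrite !mxE !big_ord_recr big_ord0 /= !mxE.
by case: i => [[|[|//]] ?]; rewrite add0r.
Qed.

Lemma mx2_eq a b c d a' b' c' d' : a = a' -> b = b' -> c = c' -> d = d' ->
  mx2 a b c d = mx2 a' b' c' d'.
Proof. by move=> -> -> -> ->. Qed.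

Lemma col2_eq a b a' b' : a = a' -> b = b' -> col2 a b = col2 a' b'.
Proof. by move=> -> ->. Qed.

Lemma AkE k : A_k k = mx2 1 k (k-1) 1.
Proof. by apply/matrixP => i j; rewrite !mxE; case: i => [[|[|//]] ?]; case: j => [[|[|//]] ?]. Qed.
Lemma BkE k : B_k k = mx2 1 ((k-1)*k) 1 1.
Proof. by apply/matrixP => i j; rewrite !mxE; case: i => [[|[|//]] ?]; case: j => [[|[|//]] ?]. Qed.
Lemma BkTE k : (B_k k)^T = mx2 1 1 ((k-1)*k) 1.
Proof. by apply/matrixP => i j; rewrite !mxE; case: i => [[|[|//]] ?]; case: j => [[|[|//]] ?]. Qed.
Lemma onesE : ones 2 = col2 1 1.
Proof. by apply/matrixP => i j; rewrite !mxE; case: i => [[|[|//]] ?]. Qed.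
Lemma trmx2 a b c d : (mx2 a b c d)^T = mx2 a c b d.
Proof. by apply/matrixP => i j; rewrite !mxE; case: i => [[|[|//]] ?]; case: j => [[|[|//]] ?]. Qed.

Fixpoint pq (ck : nat) (n : nat) : nat * nat :=
  match n with 0 => (1, 0) | n.+1 => let (p, q) := pq ck n in (p + ck * q, p + q) end%N.

Lemma pqS ck n : pq ck n.+1 = ((pq ck n).1 + ck * (pq ck n).2, (pq ck n).1 + (pq ck n).2)%N.
Proof. by rewrite /=; case: (pq ck n). Qed.

Lemma powA k n : A_k k ^+ n = mx2 (pq ((k-1)*k) n).1 (k * (pq ((k-1)*k) n).2) ((k-1) * (pq ((k-1)*k) n).2) (pq ((k-1)*k) n).1.
Proof.
elim: n => [|n IH].
  { rewrite expr0; apply/matrixP => i j; rewrite !mxE; case: i => [[|[|//]] ?]; case: j => [[|[|//]] ?] /=. all: rewrite ?muln0; reflexivity. }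
rewrite exprS -mulmxE IH AkE mx2_mul pqS /=; apply: mx2_eq; lia.
Qed.

Lemma powB k n : B_k k ^+ n = mx2 (pq ((k-1)*k) n).1 ((k-1)*k * (pq ((k-1)*k) n).2) (pq ((k-1)*k) n).2 (pq ((k-1)*k) n).1.
Proof.
elim: n => [|n IH].
  { rewrite expr0; apply/matrixP => i j; rewrite !mxE; case: i => [[|[|//]] ?]; case: j => [[|[|//]] ?] /=. all: rewrite ?muln0; reflexivity. }
rewrite exprS -mulmxE IH BkE mx2_mul pqS /=; apply: mx2_eq; lia.
Qed.

Lemma powBT k n : (B_k k)^T ^+ n *m ones 2 = col2 (pq ((k-1)*k) n.+1).2 (pq ((k-1)*k) n.+1).1.
Proof.
elim: n => [|n IH].
  by rewrite expr0 mul1mx onesE pqS /=; apply: col2_eq; lia.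
rewrite exprS -mulmxE -mulmxA IH BkTE mx2_mulc [pq _ n.+2]pqS /=; apply: col2_eq; lia.
Qed.

Lemma normId m n : let P := (pq m.+1 n).1 in let Q := (pq m.+1 n).2 in
  if odd n then (P^2 + m^n = m.+1 * Q^2)%N else (P^2 = m.+1 * Q^2 + m^n)%N.
Proof.
elim: n => [|n IH]; first by rewrite /= expn0 exp1n exp0n // muln0.
rewrite pqS /=; move: IH => /=; set P := (pq m.+1 n).1; set Q := (pq m.+1 n).2.
clearbody P Q; case: (odd n) => /= H; rewrite [(m ^ n.+1)%N]expnS; have := congr1 (muln m) H;
  move: (m ^ n)%N => M; nia.
Qed.

Lemma Qmono m n : ((pq m n).2 <= (pq m n.+1).2)%N.
Proof. rewrite pqS /=; lia. Qed.

Lemma Qgrow m j : ((m.+2)^j <= (pq m.+1 (2*j).+1).2)%N.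
Proof.
elim: j => [|j IH]; first by [].
have -> : (2 * j.+1).+1 = (2*j).+3 by lia.
rewrite !pqS /= expnS.
move: IH (Qmono m.+1 (2*j).+1); rewrite pqS /=.
set P := (pq m.+1 (2*j)).1; set Q := (pq m.+1 (2*j)).2 => IH Hm.
nia.
Qed.

Lemma bern m n : (m^n.+1 + 2 * n * m^n <= m * m.+2 ^ n)%N.
Proof.
elim: n => [|n IH]; first by rewrite !expn0 /=; lia.
rewrite [(m ^ n.+2)%N]expnS [(m ^ n.+1)%N]expnS [(m.+2 ^ n.+1)%N]expnS.
rewrite expnS in IH; move: IH; move: (m ^ n)%N (m.+2 ^ n)%N => X Y IH.
have := leq_mul (leqnn m.+2) IH; nia.
Qed.

Lemma bigpow m : (0 < m)%N -> (m ^ (2 * m^2).+1 <= m.+2 ^ (2 * m^2))%N.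
Proof.
move=> m0; have := bern m (2 * m^2).
set N := (2 * m^2)%N => H.
have H2 : (m ^ N.+2 <= 2 * N * m ^ N)%N.
  rewrite /N !expnS; nia.
have : (m * m ^ N.+1 <= m * m.+2 ^ N)%N.
  rewrite -expnS; lia.
by rewrite leq_pmul2l.
Qed.

Lemma PQbound c M P Q : (0 < c)%N -> (P^2 + M = c * c.+1 * Q^2)%N -> (M <= Q^2)%N ->
  (c * Q <= P)%N /\ (P <= c.+1 * Q)%N.
Proof.
move=> c0 H HM; split; rewrite -leq_sqr.
  have : (M <= c * Q^2)%N by apply: leq_trans HM _; rewrite leq_pmull.
  rewrite expnMn; nia.
rewrite expnMn; nia.
Qed.

Theorem mainTheorem10 (k : nat) : (2 <= k)%N ->
  unitally_shift_equivalent (A_k k) (B_k k).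
Proof.
move=> hk.
have [c kc] : exists c, k = c.+2 by exists (k - 2)%N; lia.
subst k.
have ckE : ((c.+2 - 1) * c.+2 = (c.+1 * c.+2 - 1).+1)%N by lia.
set m := (c.+1 * c.+2 - 1)%N.
have m0 : (0 < m)%N by rewrite /m; nia.
set l := (2 * m^2).+1.
have ol : odd l = true by rewrite /l -addn1 oddD oddM.
have hN : ((pq m.+1 l).1 ^ 2 + m ^ l = m.+1 * (pq m.+1 l).2 ^ 2)%N.
  by have := normId m l; cbv zeta; rewrite ol.
have hG := Qgrow m (m^2).
have hb := @bigpow m m0.
move: hN hG; rewrite -/l.
set P := (pq m.+1 l).1; set Q := (pq m.+1 l).2 => hN hG.
have HM : (m ^ l <= Q ^ 2)%N.
  by apply: leq_trans hb _; rewrite -/l mulnC expnM leq_exp2r.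
have mE : m.+1 = (c.+1 * c.+2)%N by rewrite /m; lia.
have [h1 h2] : (c.+1 * Q <= P)%N /\ (P <= c.+2 * Q)%N.
  have hN' : (P^2 + m^l = c.+1 * c.+2 * Q^2)%N by rewrite hN mE.
  exact: (@PQbound c.+1 (m^l) P Q isT hN' HM).
have [X hX] : exists X, P = (c.+1 * Q + X)%N by exists (P - c.+1 * Q)%N; lia.
have [Y hY] : exists Y, (c.+2 * Q = P + Y)%N by exists (c.+2 * Q - P)%N; lia.
have hQ : Q = (X + Y)%N.
  have : (c.+2 * Q = c.+1 * Q + Q)%N by rewrite mulSn addnC.
  lia.
have hP : P = (c.+1 * Y + c.+2 * X)%N.
  rewrite hX hQ mulnDr mulSn; lia.
clear hX hY.
exists l, (mx2 Y (c.+2 * X) X (c.+1 * Y)), (mx2 c.+1 c.+2 1 1).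
have e1 : (c.+2 - 1 = c.+1)%N by rewrite subSS subn0.
split; [split|].
- by [].
- rewrite powA ckE -/m -/l -/P -/Q mx2_mul e1; apply: mx2_eq; rewrite ?hP ?hQ; ring.
- rewrite powB ckE -/m -/l -/P -/Q mx2_mul; apply: mx2_eq; rewrite ?hP ?hQ ?mE; ring.
- rewrite AkE BkE !mx2_mul e1; apply: mx2_eq; ring.
- rewrite AkE BkE !mx2_mul e1; apply: mx2_eq; ring.
- exists 0%N, (2 * m ^ 2)%N.
  rewrite expr0 mul1mx add0n powBT ckE -/m -/l -/P -/Q trmx2 onesE mx2_mulc.
  apply: col2_eq; rewrite ?hP ?hQ; ring.
Qed.
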